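(* Let $G$ be a group, $\phi\in\mathrm{End}(G)$, and $N\trianglelefteq G$ a normal subgroup with $\phi(N)\subseteq N$. Let $\hat\phi\in\mathrm{End}(G/N)$ be given by $\hat\phi(gN):=\phi(g)N$ and let $\rho:G\to G/N$ be the canonical projection. Then for every $\phi$-cellular automaton $\mathcal{T}:A^G\to A^G$ there exists a unique $\hat\phi$-cellular automaton $\widehat{\mathcal{T}}:A^{G/N}\to A^{G/N}$ such that $\rho^*\circ\widehat{\mathcal{T}}=\mathcal{T}\circ\rho^*$.
   Context: $A$ is a finite set with $|A|\ge 2$. For a group $G$, $A^G$ is the set of functions $G\to A$ with shift action $(g\cdot x)(k):=x(g^{-1}k)$. For groups $G,H$ and $\phi\in\mathrm{Hom}(H,G)$, a $\phi$-cellular automaton is a map $\mathcal{T}:A^G\to A^H$ for which there exist finite $T\subseteq G$ and $\mu:A^T\to A$ with $\mathcal{T}(x)(h)=\mu((\phi(h^{-1})\cdot x)|_T)$ for all $x,h$. For a homomorphism $\rho:G\to G/N$, $\rho^*:A^{G/N}\to A^G$ is $\rho^*(x):=x\circ\rho$. *)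

(* Defs.v *)
From mathcomp Require Import all_boot.
Set Implicit Arguments. Unset Strict Implicit. Unset Printing Implicit Defensive.

Record group := Group {
  gcar :> Type;
  gmul : gcar -> gcar -> gcar;
  ginv : gcar -> gcar;
  gone : gcar;
  gmulA : forall x y z, gmul x (gmul y z) = gmul (gmul x y) z;
  gmul1 : forall x, gmul gone x = x;
  gmulV : forall x, gmul (ginv x) x = gone
}.

Definition is_hom (G H : group) (f : G -> H) : Prop :=
  forall x y, f (gmul x y) = gmul (f x) (f y).

Definition is_normal_subgroup (G : group) (N : G -> Prop) : Prop :=
  [/\ N (gone G),
      (forall x y, N x -> N y -> N (gmul x y)),
      (forall x, N x -> N (ginv x)) &
      (forall g x, N x -> N (gmul (gmul g x) (ginv g)))].

Definition shift (A : Type) (G : group) (g : G) (x : G -> A) : G -> A :=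
  fun k => x (gmul (ginv g) k).

Fixpoint in_list (X : Type) (t : X) (s : seq X) : Prop :=
  if s is u :: s' then u = t \/ in_list t s' else False.

(* phi-cellular automaton, phi : H -> G, Tr : A^G -> A^H.
   The local rule mu : A^T -> A is represented as a map on configurations
   depending only on the values on the finite set T (given as a list). *)
Definition is_phi_CA (A : Type) (G H : group) (phi : H -> G)
  (Tr : (G -> A) -> (H -> A)) : Prop :=
  exists (T : seq G) (mu : (G -> A) -> A),
    (forall x y : G -> A, (forall t, in_list t T -> x t = y t) -> mu x = mu y) /\
    (forall x h, Tr x h = mu (shift (phi (ginv h)) x)).

Definition pullback (A : Type) (G Q : group) (rho : G -> Q) (x : Q -> A) : G -> A :=
  fun g => x (rho g).

(* Main.v *)
Require Import Defs.
From mathcomp Require Import all_boot.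
From Stdlib Require Import FunctionalExtensionality.

Section GL.
Variable G : group.
Lemma gcancel (a b c : G) : gmul a b = gmul a c -> b = c.
Proof.
move=> H; rewrite -(gmul1 b) -(gmul1 c) -(gmulV a) -!gmulA H //.
Qed.
Lemma gmulVr (x : G) : gmul x (ginv x) = gone G.
Proof.
set y := gmul x (ginv x).
have yy : gmul y y = y.
  rewrite /y -(gmulA x (ginv x)) (gmulA (ginv x) x) gmulV gmul1 //.
have e : gmul (ginv y) (gmul y y) = gmul (ginv y) y by rewrite yy.
by rewrite gmulA gmulV gmul1 in e.
Qed.
Lemma gmul1r (x : G) : gmul x (gone G) = x.
Proof. by rewrite -(gmulV x) gmulA gmulVr gmul1. Qed.
Lemma ginv_uniq (a b : G) : gmul a b = gone G -> a = ginv b.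
Proof. by move=> H; rewrite -(gmul1r a) -(gmulVr b) gmulA H gmul1. Qed.
Lemma ginvK (x : G) : ginv (ginv x) = x.
Proof. by symmetry; apply: ginv_uniq; rewrite gmulVr. Qed.
End GL.

Lemma hom1 (G H : group) (f : G -> H) : is_hom f -> f (gone G) = gone H.
Proof.
move=> hf; apply: (@gcancel _ (f (gone G))).
by rewrite -hf gmul1 gmul1r.
Qed.
Lemma homV (G H : group) (f : G -> H) x : is_hom f -> f (ginv x) = ginv (f x).
Proof.
by move=> hf; apply: ginv_uniq; rewrite -hf gmulV hom1.
Qed.

Lemma in_list_map (X Y : Type) (f : X -> Y) t s :
  in_list t s -> in_list (f t) (map f s).
Proof. by elim: s => //= u s IH [->|/IH]; [left|right]. Qed.

Theorem lemma4p3 (A : finType) (hA : 1 < #|A|) (G Q : group)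
  (phi : G -> G) (N : G -> Prop) (rho : G -> Q) (phihat : Q -> Q) :
  is_hom phi ->
  is_normal_subgroup N ->
  (forall g, N g -> N (phi g)) ->
  is_hom rho ->
  (forall q : Q, exists g, rho g = q) ->
  (forall g, rho g = gone Q <-> N g) ->
  (forall g, phihat (rho g) = rho (phi g)) ->
  forall Tr : (G -> A) -> (G -> A), is_phi_CA phi Tr ->
  exists! That : (Q -> A) -> (Q -> A),
    is_phi_CA phihat That /\
    (forall x : Q -> A, pullback rho (That x) = Tr (pullback rho x)).
Proof.
move=> hphi _ _ hrho surj _ hph Tr [T [mu [loc hTr]]].
have key : forall x h, Tr (pullback rho x) h =
    mu (fun k => x (gmul (phihat (rho h)) (rho k))).
  move=> x h; rewrite hTr; congr mu; apply: functional_extensionality => k.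
  by rewrite /shift /pullback hrho !homV // ginvK hph.
pose That := fun (x : Q -> A) q => mu (fun k => x (gmul (phihat q) (rho k))).
exists That; split; [split|].
- exists (map rho T), (fun y => mu (fun k => y (rho k))); split.
    by move=> x y H; apply: loc => t Ht; apply: H; apply: in_list_map.
  move=> x q; rewrite /That /shift; congr mu; apply: functional_extensionality => k.
  case: (surj q) => g <-.
  by rewrite -(@homV _ _ _ g hrho) !hph (@homV _ _ _ g hphi) (@homV _ _ _ (phi g) hrho) ginvK.
- by move=> x; apply: functional_extensionality => g; rewrite key.
- move=> T' [_ HT']; apply: functional_extensionality => x.
  apply: functional_extensionality => q; case: (surj q) => g <-.
  by rewrite /That -key -HT'.
Qed.
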